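(* Let $\phi\in C^3((0,\infty))$, $\eta=\phi'$ and $\hat\eta(r)=\eta(r)+2\eta(2r)$, and suppose there are constants $0<a_0<\tilde r_1<\tilde r_2<2a_0$ and $a_1>a_0$ such that: $\eta'(r)>0$ for $0<r<\tilde r_1$ and $\eta'(r)<0$ for $r>\tilde r_1$; $\eta''(r)<0$ for $0<r<\tilde r_2$ and $\eta''(r)>0$ for $r>\tilde r_2$; $\hat\eta(r)<0$ for $0<r<a_0$ and $\hat\eta(r)>0$ for $r>a_0$; $\hat\eta'(r)>0$ for $0<r<a_1$ and $\hat\eta'(r)<0$ for $r>a_1$. Let $N,K$ be positive integers with $K<N-1$. For $\mathbf r=(r_{-N},\dots,r_N)\in(0,\infty)^{2N+1}$ define $\hat{\mathbf\Psi}^L(\mathbf r)$ by $\hat\psi^L_j(\mathbf r)=\hat\eta(r_j)$, $j=-N,\dots,N$, and $\hat{\mathbf\Psi}^F(\mathbf r)$ by $\hat\psi^F_j(\mathbf r)=\eta(r_j)+2\eta(2r_j)$ for $-N\le j\le -K$ and for $K\le j\le N$, and $\hat\psi^F_j(\mathbf r)=\eta(r_j)+\eta(r_j+r_{j-1})+\eta(r_j+r_{j+1})+[2\eta(2r_K)-\eta(r_K+r_{K-1})-\eta(r_K+r_{K+1})]$ for $-K+1\le j\le K-1$. Fix $\mathbf\Phi\in\mathbb R^{2N+1}$ and set $\mathbf h(\mathbf r,t)=(1-t)[\hat{\mathbf\Psi}^L(\mathbf r)-\mathbf\Phi]+t[\hat{\mathbf\Psi}^F(\mathbf r)-\mathbf\Phi]$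 for $t\in[0,1]$. Let $0<r_L<r_U<a_1$ and $\Omega=(r_L,r_U)^{2N+1}$. Suppose that for every $i=-N,\dots,N$, every $t\in[0,1]$ and every $\mathbf r\in\partial\Omega$: $h_i(\mathbf r,t)>0$ if $r_i=r_U$, and $h_i(\mathbf r,t)<0$ if $r_i=r_L$. If the Jacobian matrix $D\hat{\mathbf\Psi}^F(\mathbf r)$ (with entries $D_j\hat\psi^F_i(\mathbf r)$) is strictly diagonally dominant with positive diagonal, i.e. $D_i\hat\psi^F_i(\mathbf r)>\sum_{j\ne i}|D_j\hat\psi^F_i(\mathbf r)|$ for all $i$, for all $\mathbf r\in\Omega$, then there exists a unique solution $\mathbf r\in\Omega$ of $\hat{\mathbf\Psi}^F(\mathbf r)=\mathbf\Phi$.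
   Context: $\hat{\mathbf\Psi}^L$ and $\hat{\mathbf\Psi}^F$ are the conjugate forces of the local and (symmetrized) force-based quasicontinuum approximations of a one-dimensional atomic chain with nearest and next-nearest neighbour pair interactions given by $\phi$. *)

(* Defs.v *)
From Stdlib Require Import Reals ZArith.
From Coquelicot Require Import Coquelicot.
Open Scope R_scope.

(* Configurations r = (r_{-N},...,r_N) are functions Z -> R; only the
   indices -N..N are meaningful. *)
Definition in_idx (N j : Z) : Prop := (- N <= j <= N)%Z.

Definition eta (phi : R -> R) : R -> R := Derive phi.
Definition eta_hat (phi : R -> R) (r : R) : R := eta phi r + 2 * eta phi (2 * r).

Definition psiL (phi : R -> R) (r : Z -> R) (j : Z) : R := eta_hat phi (r j).

Definition psiF (phi : R -> R) (K : Z) (r : Z -> R) (j : Z) : R :=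
  if andb (- K + 1 <=? j)%Z (j <=? K - 1)%Z then
    eta phi (r j) + eta phi (r j + r (j - 1)%Z) + eta phi (r j + r (j + 1)%Z)
    + (2 * eta phi (2 * r K) - eta phi (r K + r (K - 1)%Z)
       - eta phi (r K + r (K + 1)%Z))
  else eta phi (r j) + 2 * eta phi (2 * r j).

Definition hom (phi : R -> R) (K : Z) (Phi : Z -> R) (r : Z -> R) (t : R) (i : Z) : R :=
  (1 - t) * (psiL phi r i - Phi i) + t * (psiF phi K r i - Phi i).

Definition upd (r : Z -> R) (j : Z) (x : R) : Z -> R :=
  fun k => if Z.eqb k j then x else r k.

Definition DpsiF (phi : R -> R) (K : Z) (r : Z -> R) (i j : Z) : R :=
  Derive (fun x => psiF phi K (upd r j x) i) (r j).

Definition sum_idx (N : Z) (f : Z -> R) : R :=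
  sum_f_R0 (fun k => f (Z.of_nat k - N)%Z) (Z.to_nat (2 * N)).

Definition in_Omega (N : Z) (rL rU : R) (r : Z -> R) : Prop :=
  forall j, in_idx N j -> rL < r j < rU.

Definition in_bdry_Omega (N : Z) (rL rU : R) (r : Z -> R) : Prop :=
  (forall j, in_idx N j -> rL <= r j <= rU) /\
  (exists j, in_idx N j /\ (r j = rL \/ r j = rU)).

(* Main.v *)
Require Import Defs.
From Stdlib Require Import Reals ZArith Lra Lia Classical ClassicalEpsilon FunctionalExtensionality List.
From Coquelicot Require Import Coquelicot.
Open Scope R_scope.

Definition inC (N : Z) (rL rU : R) (r : Z -> R) : Prop :=
  forall j, in_idx N j -> rL <= r j <= rU.

Definition freeI (N : Z) (m : nat) (j : Z) : Prop := (- N <= j < - N + Z.of_nat m)%Z.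

Definition HCt (N : Z) (rL rU : R) (F : (Z -> R) -> Z -> R) : Prop :=
  forall x, inC N rL rU x -> forall i, in_idx N i -> forall eps, eps > 0 ->
  exists del, del > 0 /\ forall y, inC N rL rU y ->
    (forall j, in_idx N j -> Rabs (y j - x j) < del) -> Rabs (F y i - F x i) < eps.

Definition HPMt (N : Z) (rL rU : R) (F : (Z -> R) -> Z -> R) : Prop :=
  forall r i, in_idx N i -> in_bdry_Omega N rL rU r ->
    (r i = rU -> F r i > 0) /\ (r i = rL -> F r i < 0).

Definition HDt (N : Z) (rL rU : R) (F : (Z -> R) -> Z -> R) : Prop :=
  forall x y i, in_Omega N rL rU x -> in_Omega N rL rU y -> in_idx N i ->
    (forall k, in_idx N k -> Rabs (y k - x k) <= Rabs (y i - x i)) ->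
    y i <> x i -> (F y i - F x i) * (y i - x i) > 0.

Lemma max_idx (N : Z) (d : Z -> R) : (0 <= N)%Z ->
  exists i, in_idx N i /\ forall k, in_idx N k -> Rabs (d k) <= Rabs (d i).
Proof.
  intro HN.
  assert (H : forall M : nat, exists k0, (k0 <= M)%nat /\ forall k, (k <= M)%nat ->
     Rabs (d (Z.of_nat k - N)%Z) <= Rabs (d (Z.of_nat k0 - N)%Z)).
  { induction M as [|M IH].
    - exists 0%nat; split; [lia|]. intros k Hk. replace k with 0%nat by lia. lra.
    - destruct IH as [k0 [Hk0 Hm]].
      destruct (Rle_dec (Rabs (d (Z.of_nat (S M) - N)%Z)) (Rabs (d (Z.of_nat k0 - N)%Z))).
      + exists k0; split; [lia|]. intros k Hk. destruct (Nat.eq_dec k (S M)).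
        * subst; lra.
        * apply Hm; lia.
      + exists (S M); split; [lia|]. intros k Hk. destruct (Nat.eq_dec k (S M)).
        * subst; lra.
        * specialize (Hm k ltac:(lia)); lra. }
  destruct (H (Z.to_nat (2 * N))) as [k0 [Hk0 Hm]].
  exists (Z.of_nat k0 - N)%Z; split; [unfold in_idx; lia|].
  intros k Hk. unfold in_idx in Hk.
  specialize (Hm (Z.to_nat (k + N)) ltac:(lia)).
  replace (Z.of_nat (Z.to_nat (k + N)) - N)%Z with k in Hm by lia. exact Hm.
Qed.

Lemma lip_lemma N rL rU F (HD : HDt N rL rU F) (HN : (0 <= N)%Z) (m : nat) q z z' :
  q = (- N + Z.of_nat m)%Z -> in_idx N q ->
  in_Omega N rL rU z -> in_Omega N rL rU z' ->
  (forall j, in_idx N j -> ~ freeI N (S m) j -> z j = z' j) ->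
  (forall i, freeI N m i -> F z i = 0) -> (forall i, freeI N m i -> F z' i = 0) ->
  forall j, in_idx N j -> Rabs (z' j - z j) <= Rabs (z' q - z q).
Proof.
  intros Hq Hqi Hz Hz' Hfix HF HF'.
  destruct (max_idx N (fun k => z' k - z k) HN) as [i [Hi Hmax]]. simpl in Hmax.
  destruct (Rle_dec (Rabs (z' i - z i)) (Rabs (z' q - z q))) as [Hle|Hnle].
  - intros j Hj. eapply Rle_trans; [apply Hmax; exact Hj| exact Hle].
  - exfalso.
    assert (Hfi : freeI N m i).
    { destruct (classic (freeI N (S m) i)) as [Hf|Hnf].
      - unfold freeI in *. destruct (Z.eq_dec i q) as [->|Hne].
        + lra.
        + lia.
      - rewrite (Hfix i Hi Hnf) in Hnle. rewrite Rminus_diag, Rabs_R0 in Hnle.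
        pose proof (Rabs_pos (z' q - z q)); lra. }
    assert (Hne : z' i <> z i).
    { intro He. rewrite He, Rminus_diag, Rabs_R0 in Hnle.
      pose proof (Rabs_pos (z' q - z q)); lra. }
    pose proof (HD z z' i Hz Hz' Hi Hmax Hne) as Hp.
    rewrite (HF i Hfi), (HF' i Hfi) in Hp. lra.
Qed.

Lemma seq_lim (e c : R) : is_lim_seq (fun k => e + c / (INR k + 2)) e.
Proof.
  apply is_lim_seq_spec. intros [eps Heps]. simpl.
  destruct (archimed (Rabs c / eps)) as [Hup _].
  assert (Hpos : 0 <= Rabs c / eps) by (apply Rdiv_le_0_compat; [apply Rabs_pos|lra]).
  exists (Z.to_nat (up (Rabs c / eps))). intros n Hn.
  assert (HnR : IZR (up (Rabs c / eps)) <= INR n).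
  { assert (0 <= up (Rabs c / eps))%Z.
    { apply le_IZR. lra. }
    rewrite <- (Z2Nat.id (up (Rabs c / eps))) by lia.
    rewrite <- INR_IZR_INZ. apply le_INR. exact Hn. }
  pose proof (pos_INR n) as Hn0.
  replace (e + c / (INR n + 2) - e) with (c / (INR n + 2)) by (field; lra).
  unfold Rdiv. rewrite Rabs_mult, Rabs_inv, (Rabs_right (INR n + 2)) by lra.
  assert (Hc : Rabs c < eps * (INR n + 2)).
  { assert (Rabs c / eps < INR n + 2) by lra.
    apply (Rmult_lt_compat_l eps) in H; [|lra].
    replace (eps * (Rabs c / eps)) with (Rabs c) in H by (field; lra). exact H. }
  apply (Rmult_lt_reg_r (INR n + 2)); [lra|].
  rewrite Rmult_assoc, Rinv_l by lra. lra.
Qed.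

Lemma clamp_lip lo hi x y : lo <= hi ->
  Rabs (Rmax lo (Rmin hi y) - Rmax lo (Rmin hi x)) <= Rabs (y - x).
Proof.
  intros H. unfold Rmax, Rmin.
  repeat destruct Rle_dec; unfold Rabs; repeat destruct Rcase_abs; lra.
Qed.

Lemma IVT_open (rL rU : R) (g : R -> R) :
  (forall s, rL < s < rU -> forall eps, eps > 0 -> exists del, del > 0 /\
     forall s', rL < s' < rU -> Rabs (s' - s) < del -> Rabs (g s' - g s) < eps) ->
  forall a b, rL < a < rU -> rL < b < rU -> g a < 0 -> 0 < g b ->
  exists c, rL < c < rU /\ g c = 0.
Proof.
  intros Hg a b Ha Hb Hga Hgb.
  set (lo := Rmin a b). set (hi := Rmax a b).
  assert (Hlh : lo <= hi) by (unfold lo, hi, Rmin, Rmax; repeat destruct Rle_dec; lra).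
  assert (Hlo : rL < lo < rU) by (unfold lo, Rmin; destruct Rle_dec; lra).
  assert (Hhi : rL < hi < rU) by (unfold hi, Rmax; destruct Rle_dec; lra).
  set (cl := fun s => Rmax lo (Rmin hi s)).
  assert (Hcl : forall s, lo <= cl s <= hi).
  { intro s; unfold cl, Rmax, Rmin; repeat destruct Rle_dec; lra. }
  assert (Hcl2 : forall s, lo <= s <= hi -> cl s = s).
  { intros s Hs; unfold cl, Rmax, Rmin; repeat destruct Rle_dec; lra. }
  set (h := fun s => g (cl s)).
  assert (Hcont : continuity h).
  { intro x. unfold continuity_pt, continue_in, limit1_in, limit_in.
    intros eps Heps. simpl. unfold R_dist.
    destruct (Hg (cl x) ltac:(specialize (Hcl x); lra) eps Heps) as [del [Hdel H]].
    exists del; split; [exact Hdel|]. intros y [_ Hy]. unfold h.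
    apply H. specialize (Hcl y); lra.
    eapply Rle_lt_trans; [apply clamp_lip; exact Hlh| exact Hy]. }
  destruct (IVT_gen h a b 0 Hcont) as [c [Hc Hhc]].
  { assert (h a = g a) by (unfold h; rewrite Hcl2; [reflexivity|unfold lo, hi, Rmin, Rmax; repeat destruct Rle_dec; lra]).
    assert (h b = g b) by (unfold h; rewrite Hcl2; [reflexivity|unfold lo, hi, Rmin, Rmax; repeat destruct Rle_dec; lra]).
    unfold Rmin, Rmax; repeat destruct Rle_dec; lra. }
  exists c. fold lo hi in Hc. split; [lra|].
  unfold h in Hhc. rewrite Hcl2 in Hhc by exact Hc. exact Hhc.
Qed.

Definition Pm N rL rU (F : (Z -> R) -> Z -> R) (m : nat) : Prop :=
  (Z.of_nat m <= 2 * N + 1)%Z -> forall v, in_Omega N rL rU v ->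
  exists z, in_Omega N rL rU z /\ (forall j, in_idx N j -> ~ freeI N m j -> z j = v j) /\
    (forall i, freeI N m i -> F z i = 0).

Lemma step N rL rU F (HN : (0 <= N)%Z) (Hlt : rL < rU) (HC : HCt N rL rU F) (HPM : HPMt N rL rU F)
  (HD : HDt N rL rU F) m : Pm N rL rU F m -> Pm N rL rU F (S m).
Proof.
  intros IH Hm v Hv.
  set (q := (- N + Z.of_nat m)%Z).
  assert (Hqi : in_idx N q) by (unfold q, in_idx; lia).
  set (Q := fun s z => in_Omega N rL rU z /\
       (forall j, in_idx N j -> ~ freeI N m j -> z j = upd v q s j) /\
       (forall i, freeI N m i -> F z i = 0)).
  assert (Hex : forall s, rL < s < rU -> exists z, Q s z).
  { intros s Hs. apply IH. lia.
    intros j Hj. unfold upd. destruct (Z.eqb j q); [exact Hs| apply Hv; exact Hj]. }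
  set (zf := fun s => epsilon (inhabits v) (Q s)).
  assert (Hzf : forall s, rL < s < rU -> Q s (zf s)).
  { intros s Hs. apply epsilon_spec. apply Hex. exact Hs. }
  assert (Hzq : forall s, rL < s < rU -> zf s q = s).
  { intros s Hs. destruct (Hzf s Hs) as [_ [H _]]. rewrite H; auto.
    unfold upd; rewrite Z.eqb_refl; reflexivity. unfold freeI, q; lia. }
  assert (Hlip : forall s s', rL < s < rU -> rL < s' < rU ->
             forall j, in_idx N j -> Rabs (zf s' j - zf s j) <= Rabs (s' - s)).
  { intros s s' Hs Hs' j Hj.
    destruct (Hzf s Hs) as [Z1 [Z2 Z3]]. destruct (Hzf s' Hs') as [Z1' [Z2' Z3']].
    replace (s' - s) with (zf s' q - zf s q) by (rewrite (Hzq s Hs), (Hzq s' Hs'); reflexivity).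
    apply (lip_lemma N rL rU F HD HN m q (zf s) (zf s')); auto.
    intros k Hk Hnf. rewrite Z2, Z2'; auto.
    - unfold upd. destruct (Z.eqb_spec k q); [unfold freeI, q in *; lia| reflexivity].
    - unfold freeI in *; lia.
    - unfold freeI in *; lia. }
  set (g := fun s => F (zf s) q).
  assert (HinC : forall s, rL < s < rU -> inC N rL rU (zf s)).
  { intros s Hs j Hj. destruct (Hzf s Hs) as [Z1 _]. specialize (Z1 j Hj); lra. }
  assert (Hgc : forall s, rL < s < rU -> forall eps, eps > 0 -> exists del, del > 0 /\
     forall s', rL < s' < rU -> Rabs (s' - s) < del -> Rabs (g s' - g s) < eps).
  { intros s Hs eps Heps.
    destruct (HC (zf s) (HinC s Hs) q Hqi eps Heps) as [del [Hdel H]].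
    exists del; split; auto. intros s' Hs' Hd. apply H. apply HinC; auto.
    intros j Hj. eapply Rle_lt_trans; [apply Hlip; auto| exact Hd]. }
  assert (Hlim : forall (sq : nat -> R) (e : R), (forall k, rL < sq k < rU) -> is_lim_seq sq e ->
     exists zs, inC N rL rU zs /\ zs q = e /\ forall del, del > 0 -> exists k,
       forall j, in_idx N j -> Rabs (zf (sq k) j - zs j) < del).
  { intros sq e Hsq Hl.
    assert (Hcv : forall j, in_idx N j ->
               is_lim_seq (fun k => zf (sq k) j) (real (Lim_seq (fun k => zf (sq k) j)))).
    { intros j Hj. apply Lim_seq_correct'. apply ex_lim_seq_cauchy_corr.
      intros [eps Heps]. apply is_lim_seq_spec in Hl. unfold is_lim_seq' in Hl.
      destruct (Hl (mkposreal (eps/2) ltac:(lra))) as [N0 HN0]. simpl in HN0.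
      exists N0. intros n m' Hn Hm'. simpl.
      eapply Rle_lt_trans; [apply Hlip; auto|].
      specialize (HN0 n Hn) as HN1.
      assert (Rabs (sq m' - e) < eps/2) by (apply HN0; exact Hm').
      unfold Rabs in *; repeat destruct Rcase_abs; lra. }
    set (zs := fun j => real (Lim_seq (fun k => zf (sq k) j))).
    assert (Hbd : forall k j, in_idx N j -> Rabs (zf (sq k) j - zs j) <= Rabs (sq k - e)).
    { intros k j Hj.
      assert (H := is_lim_seq_le (fun l => Rabs (zf (sq k) j - zf (sq l) j))
                    (fun l => Rabs (sq k - sq l)) (Rabs (zf (sq k) j - zs j)) (Rabs (sq k - e))).
      simpl in H. apply H.
      - intro l. apply Hlip; auto.
      - apply (is_lim_seq_abs _ (Finite (zf (sq k) j - zs j))).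
        apply is_lim_seq_minus'. apply is_lim_seq_const. apply Hcv; auto.
      - apply (is_lim_seq_abs _ (Finite (sq k - e))).
        apply is_lim_seq_minus'. apply is_lim_seq_const. exact Hl. }
    exists zs. split; [|split].
    - intros j Hj. split.
      + assert (H := is_lim_seq_le (fun _ => rL) (fun l => zf (sq l) j) rL (zs j)).
        simpl in H. apply H. intro l. destruct (Hzf (sq l) (Hsq l)) as [Z1 _].
        specialize (Z1 j Hj); lra. apply is_lim_seq_const. apply Hcv; auto.
      + assert (H := is_lim_seq_le (fun l => zf (sq l) j) (fun _ => rU) (zs j) rU).
        simpl in H. apply H. intro l. destruct (Hzf (sq l) (Hsq l)) as [Z1 _].
        specialize (Z1 j Hj); lra. apply Hcv; auto. apply is_lim_seq_const.
    - assert (H1 : is_lim_seq sq (zs q)).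
      { apply (is_lim_seq_ext (fun k => zf (sq k) q)). intro k. apply Hzq; auto.
        apply Hcv; auto. }
      apply is_lim_seq_unique in H1. apply is_lim_seq_unique in Hl.
      rewrite Hl in H1. injection H1; auto.
    - intros del Hdel. apply is_lim_seq_spec in Hl. unfold is_lim_seq' in Hl.
      destruct (Hl (mkposreal del Hdel)) as [N0 HN0]. exists N0.
      intros j Hj. eapply Rle_lt_trans; [apply Hbd; auto| apply HN0; lia]. }
  assert (Hend : forall e c, (forall k, rL < e + c / (INR k + 2) < rU) ->
     (e = rL -> exists s, rL < s < rU /\ g s < 0) /\ (e = rU -> exists s, rL < s < rU /\ g s > 0)).
  { intros e c Hsq.
    destruct (Hlim _ e Hsq (seq_lim e c)) as [zs [HzC [Hzsq Hcl]]].
    split; intro He.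
    - assert (Hb : in_bdry_Omega N rL rU zs).
      { split; auto. exists q; split; auto. left; congruence. }
      destruct (HPM zs q Hqi Hb) as [HU HL].
      specialize (HL ltac:(congruence)).
      destruct (HC zs HzC q Hqi (- F zs q) ltac:(lra)) as [del [Hdel H]].
      destruct (Hcl del Hdel) as [k Hk].
      exists (e + c / (INR k + 2)); split; auto.
      assert (H2 := H (zf (e + c / (INR k + 2))) (HinC _ (Hsq k)) Hk).
      unfold g. unfold Rabs in H2; destruct Rcase_abs; lra.
    - assert (Hb : in_bdry_Omega N rL rU zs).
      { split; auto. exists q; split; auto. right; congruence. }
      destruct (HPM zs q Hqi Hb) as [HU HL].
      specialize (HU ltac:(congruence)).
      destruct (HC zs HzC q Hqi (F zs q) ltac:(lra)) as [del [Hdel H]].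
      destruct (Hcl del Hdel) as [k Hk].
      exists (e + c / (INR k + 2)); split; auto.
      assert (H2 := H (zf (e + c / (INR k + 2))) (HinC _ (Hsq k)) Hk).
      unfold g. unfold Rabs in H2; destruct Rcase_abs; lra. }
  assert (Hk2 : forall k, 0 < (rU - rL) / (INR k + 2) < rU - rL).
  { intro k. pose proof (pos_INR k). split.
    - apply Rdiv_lt_0_compat; lra.
    - apply (Rmult_lt_reg_r (INR k + 2)); [lra|].
      unfold Rdiv; rewrite Rmult_assoc, Rinv_l by lra. nra. }
  destruct (proj1 (Hend rL (rU - rL) ltac:(intro k; specialize (Hk2 k); lra)) eq_refl) as [s1 [Hs1 Hg1]].
  destruct (proj2 (Hend rU (- (rU - rL)) ltac:(intro k; specialize (Hk2 k);
     unfold Rdiv in *; rewrite Ropp_mult_distr_l_reverse; lra)) eq_refl) as [s2 [Hs2 Hg2]].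
  destruct (IVT_open rL rU g Hgc s1 s2 Hs1 Hs2 Hg1 Hg2) as [c [Hc Hgc0]].
  destruct (Hzf c Hc) as [Z1 [Z2 Z3]].
  exists (zf c). split; [exact Z1| split].
  - intros j Hj Hnf. rewrite Z2; auto.
    + unfold upd. destruct (Z.eqb_spec j q); [unfold freeI, q in *; lia| reflexivity].
    + unfold freeI in *; lia.
  - intros i Hi. destruct (Z.eq_dec i q) as [->|Hne].
    + exact Hgc0.
    + apply Z3. unfold freeI, q in *; lia.
Qed.

Lemma abstract_main N rL rU F (HN : (0 <= N)%Z) (Hlt : rL < rU) (HC : HCt N rL rU F)
  (HPM : HPMt N rL rU F) (HD : HDt N rL rU F) :
  exists z, in_Omega N rL rU z /\ (forall i, in_idx N i -> F z i = 0) /\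
    (forall z', in_Omega N rL rU z' -> (forall i, in_idx N i -> F z' i = 0) ->
       forall j, in_idx N j -> z' j = z j).
Proof.
  assert (HP : forall m, Pm N rL rU F m).
  { induction m as [|m IH].
    - intros _ v Hv. exists v. split; auto. split; auto. intros i Hi. unfold freeI in Hi. simpl in Hi. lia.
    - apply step; auto. }
  destruct (HP (Z.to_nat (2 * N + 1)) ltac:(lia) (fun _ => (rL + rU) / 2)) as [z [Hz [_ HF]]].
  { intros j _. lra. }
  exists z. split; auto. split.
  { intros i Hi. apply HF. unfold freeI, in_idx in *. lia. }
  intros z' Hz' HF' j Hj.
  destruct (max_idx N (fun k => z' k - z k) HN) as [i [Hi Hmax]]. simpl in Hmax.
  destruct (Req_dec (z' i) (z i)) as [He|Hne].
  - specialize (Hmax j Hj). rewrite He, Rminus_diag, Rabs_R0 in Hmax.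
    pose proof (Rabs_pos (z' j - z j)).
    assert (Rabs (z' j - z j) = 0) by lra.
    apply Rabs_eq_0 in H0. lra.
  - pose proof (HD z z' i Hz Hz' Hi Hmax Hne) as Hp.
    rewrite HF' in Hp by auto. rewrite (HF i) in Hp by (unfold freeI, in_idx in *; lia). lra.
Qed.

Inductive trm := Tm (w al be : R) (a b : Z).

Definition ev (phi : R -> R) (ts : list trm) (r : Z -> R) : R :=
  fold_right (fun t acc => match t with Tm w al be a b => w * eta phi (al * r a + be * r b) + acc end) 0 ts.

Definition pd (phi : R -> R) (ts : list trm) (r : Z -> R) (j : Z) : R :=
  fold_right (fun t acc => match t with Tm w al be a b =>
     w * Derive (eta phi) (al * r a + be * r b) *
       (al * (if Z.eqb a j then 1 else 0) + be * (if Z.eqb b j then 1 else 0)) + acc end) 0 ts.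

Definition dd (phi : R -> R) (ts : list trm) (p d : Z -> R) : R :=
  fold_right (fun t acc => match t with Tm w al be a b =>
     w * Derive (eta phi) (al * p a + be * p b) * (al * d a + be * d b) + acc end) 0 ts.

Definition good (N : Z) (t : trm) : Prop :=
  match t with Tm w al be a b => al > 0 /\ be >= 0 /\ in_idx N a /\ in_idx N b end.

Lemma term_derive phi (Hed : forall u, 0 < u -> ex_derive (eta phi) u) w c e x0 :
  0 < c * x0 + e ->
  is_derive (fun x => w * eta phi (c * x + e)) x0 (w * Derive (eta phi) (c * x0 + e) * c).
Proof.
  intro Hp. auto_derive.
  - apply Hed; exact Hp.
  - change (fun x : R => eta phi x) with (eta phi). ring.
Qed.

Lemma ev_upd_derive phi (Hed : forall u, 0 < u -> ex_derive (eta phi) u) N ts r j :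
  List.Forall (good N) ts -> (forall k, in_idx N k -> r k > 0) ->
  is_derive (fun x => ev phi ts (upd r j x)) (r j) (pd phi ts r j).
Proof.
  intros Hg Hr. induction Hg as [|t ts Ht Hg IH].
  - simpl. apply (is_derive_const 0).
  - destruct t as [w al be a b]. simpl in Ht |- *. destruct Ht as [Hal [Hbe [Ha Hb]]].
    apply (is_derive_plus (fun x => w * eta phi (al * upd r j x a + be * upd r j x b))
             (fun x => ev phi ts (upd r j x))); [|exact IH].
    set (c := al * (if Z.eqb a j then 1 else 0) + be * (if Z.eqb b j then 1 else 0)).
    set (e := al * (if Z.eqb a j then 0 else r a) + be * (if Z.eqb b j then 0 else r b)).
    assert (Hv : c * r j + e = al * r a + be * r b).
    { unfold c, e. destruct (Z.eqb_spec a j); destruct (Z.eqb_spec b j); subst; ring. }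
    assert (Hpos : 0 < al * r a + be * r b).
    { pose proof (Hr a Ha); pose proof (Hr b Hb). nra. }
    rewrite <- Hv. fold c.
    apply (is_derive_ext (fun x => w * eta phi (c * x + e))).
    + intro x. unfold upd, c, e. f_equal. f_equal.
      destruct (Z.eqb a j); destruct (Z.eqb b j); ring.
    + apply term_derive; auto. rewrite Hv; exact Hpos.
Qed.

Lemma ev_dir_derive phi (Hed : forall u, 0 < u -> ex_derive (eta phi) u) N ts x d t0 :
  List.Forall (good N) ts -> (forall k, in_idx N k -> x k + t0 * d k > 0) ->
  is_derive (fun t => ev phi ts (fun k => x k + t * d k)) t0 (dd phi ts (fun k => x k + t0 * d k) d).
Proof.
  intros Hg Hr. induction Hg as [|t ts Ht Hg IH].
  - simpl. apply (is_derive_const 0).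
  - destruct t as [w al be a b]. simpl in Ht |- *. destruct Ht as [Hal [Hbe [Ha Hb]]].
    apply (is_derive_plus (fun t => w * eta phi (al * (x a + t * d a) + be * (x b + t * d b)))
             (fun t => ev phi ts (fun k => x k + t * d k))); [|exact IH].
    set (c := al * d a + be * d b). set (e := al * x a + be * x b).
    assert (Hv : c * t0 + e = al * (x a + t0 * d a) + be * (x b + t0 * d b)).
    { unfold c, e. ring. }
    assert (Hpos : 0 < al * (x a + t0 * d a) + be * (x b + t0 * d b)).
    { pose proof (Hr a Ha); pose proof (Hr b Hb). nra. }
    rewrite <- Hv.
    apply (is_derive_ext (fun t => w * eta phi (c * t + e))).
    + intro t. unfold c, e. f_equal. f_equal. ring.
    + apply term_derive; auto. rewrite Hv; exact Hpos.
Qed.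

Lemma sum_idx_ext N f g : (forall j, f j = g j) -> sum_idx N f = sum_idx N g.
Proof. intro H. unfold sum_idx. apply sum_eq. intros; apply H. Qed.

Lemma sum_idx_plus N f g : sum_idx N (fun j => f j + g j) = sum_idx N f + sum_idx N g.
Proof. unfold sum_idx. apply sum_plus. Qed.

Lemma sum_idx_scal N c f : sum_idx N (fun j => c * f j) = c * sum_idx N f.
Proof. unfold sum_idx. rewrite scal_sum. apply sum_eq. intros; ring. Qed.

Lemma sum_idx_le N f g : (0 <= N)%Z -> (forall j, in_idx N j -> f j <= g j) -> sum_idx N f <= sum_idx N g.
Proof.
  intros HN H. unfold sum_idx. apply sum_Rle. intros n Hn. apply H. unfold in_idx. lia.
Qed.

Lemma sum_idx_delta N a f : in_idx N a ->
  sum_idx N (fun j => if Z.eqb j a then f j else 0) = f a.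
Proof.
  intro Ha. unfold in_idx in Ha. unfold sum_idx.
  assert (H : forall M, sum_f_R0 (fun k => if Z.eqb (Z.of_nat k - N) a then f (Z.of_nat k - N)%Z else 0) M
     = if Nat.leb (Z.to_nat (a + N)) M then f a else 0).
  { induction M as [|M IH].
    - cbn [sum_f_R0]. destruct (Z.eqb (Z.of_nat 0 - N) a) eqn:E;
        destruct (Nat.leb_spec (Z.to_nat (a + N)) 0).
      + apply Z.eqb_eq in E. rewrite E. reflexivity.
      + apply Z.eqb_eq in E. lia.
      + apply Z.eqb_neq in E. lia.
      + reflexivity.
    - cbn [sum_f_R0]. rewrite IH.
      destruct (Z.eq_dec (Z.of_nat (S M) - N) a) as [E|E].
      + rewrite (proj2 (Z.eqb_eq _ _) E).
        destruct (Nat.leb_spec (Z.to_nat (a + N)) M); [lia|].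
        destruct (Nat.leb_spec (Z.to_nat (a + N)) (S M)); [|lia].
        rewrite E; ring.
      + rewrite (proj2 (Z.eqb_neq _ _) E).
        destruct (Nat.leb_spec (Z.to_nat (a + N)) M);
        destruct (Nat.leb_spec (Z.to_nat (a + N)) (S M)); try lia; ring. }
  rewrite H. destruct (Nat.leb_spec (Z.to_nat (a + N)) (Z.to_nat (2 * N))); [reflexivity| lia].
Qed.

Lemma sum_idx_delta' N a f : in_idx N a ->
  sum_idx N (fun j => if Z.eqb a j then f j else 0) = f a.
Proof.
  intro Ha. rewrite <- (sum_idx_delta N a f Ha). apply sum_idx_ext. intro j. rewrite Z.eqb_sym. reflexivity.
Qed.

Lemma sum_pd phi N ts p d : List.Forall (good N) ts ->
  sum_idx N (fun j => pd phi ts p j * d j) = dd phi ts p d.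
Proof.
  intro Hg. induction Hg as [|t ts Ht Hg IH].
  - rewrite (sum_idx_ext N _ (fun _ => 0)) by (intro; simpl; ring). unfold sum_idx. rewrite sum_cte. simpl. ring.
  - destruct t as [w al be a b]. simpl in Ht |- *. destruct Ht as [Hal [Hbe [Ha Hb]]].
    set (E := Derive (eta phi) (al * p a + be * p b)).
    rewrite (sum_idx_ext N _ (fun j => (w * E * al * (if Z.eqb a j then d j else 0) +
         w * E * be * (if Z.eqb b j then d j else 0)) + pd phi ts p j * d j)).
    + rewrite sum_idx_plus, sum_idx_plus, IH.
      rewrite (sum_idx_scal N (w * E * al)), (sum_idx_scal N (w * E * be)).
      rewrite (sum_idx_delta' N a d Ha), (sum_idx_delta' N b d Hb). ring.
    + intro j. fold E. destruct (Z.eqb a j); destruct (Z.eqb b j); ring.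
Qed.

Lemma eta_cont phi (Hed : forall u, 0 < u -> ex_derive (eta phi) u) u : 0 < u ->
  forall eps, eps > 0 -> exists del, del > 0 /\ forall v, Rabs (v - u) < del -> Rabs (eta phi v - eta phi u) < eps.
Proof.
  intros Hu eps Heps.
  assert (Hc : continuity_pt (eta phi) u).
  { apply derivable_continuous_pt. apply ex_derive_Reals_0. apply Hed; exact Hu. }
  destruct (Hc eps Heps) as [del [Hdel H]].
  exists del; split; [exact Hdel|]. intros v Hv.
  destruct (Req_dec v u) as [->|Hne].
  - rewrite Rminus_diag, Rabs_R0; exact Heps.
  - apply (H v). split; [split; [exact I| auto]| exact Hv].
Qed.

Lemma ev_cont phi (Hed : forall u, 0 < u -> ex_derive (eta phi) u) N ts x :
  List.Forall (good N) ts -> (forall k, in_idx N k -> x k > 0) ->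
  forall eps, eps > 0 -> exists del, del > 0 /\ forall y,
    (forall j, in_idx N j -> Rabs (y j - x j) < del) -> Rabs (ev phi ts y - ev phi ts x) < eps.
Proof.
  intros Hg Hx. induction Hg as [|t ts Ht Hg IH]; intros eps Heps.
  - exists 1; split; [lra|]. intros y _. simpl. rewrite Rminus_diag, Rabs_R0. exact Heps.
  - destruct t as [w al be a b]. simpl in Ht |- *. destruct Ht as [Hal [Hbe [Ha Hb]]].
    assert (Hpos : 0 < al * x a + be * x b).
    { pose proof (Hx a Ha); pose proof (Hx b Hb). nra. }
    assert (Hw : 0 < Rabs w + 1) by (pose proof (Rabs_pos w); lra).
    destruct (eta_cont phi Hed _ Hpos (eps / 2 / (Rabs w + 1))) as [d1 [Hd1 H1]].
    { apply Rdiv_lt_0_compat; lra. }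
    destruct (IH (eps / 2) ltac:(lra)) as [d2 [Hd2 H2]].
    exists (Rmin (d1 / (al + be + 1)) d2). split.
    { apply Rmin_glb_lt; [apply Rdiv_lt_0_compat; lra| exact Hd2]. }
    intros y Hy.
    assert (Hy2 : forall j, in_idx N j -> Rabs (y j - x j) < d2).
    { intros j Hj. eapply Rlt_le_trans; [apply Hy; auto| apply Rmin_r]. }
    assert (Hy1 : forall j, in_idx N j -> Rabs (y j - x j) < d1 / (al + be + 1)).
    { intros j Hj. eapply Rlt_le_trans; [apply Hy; auto| apply Rmin_l]. }
    specialize (H2 y Hy2).
    assert (Hv : Rabs ((al * y a + be * y b) - (al * x a + be * x b)) < d1).
    { replace ((al * y a + be * y b) - (al * x a + be * x b)) with (al * (y a - x a) + be * (y b - x b)) by ring.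
      eapply Rle_lt_trans; [apply Rabs_triang|].
      rewrite !Rabs_mult, (Rabs_right al), (Rabs_right be) by lra.
      pose proof (Hy1 a Ha); pose proof (Hy1 b Hb).
      assert (Hq : d1 / (al + be + 1) * (al + be + 1) = d1) by (field; lra).
      pose proof (Rabs_pos (y a - x a)); pose proof (Rabs_pos (y b - x b)).
      nra. }
    specialize (H1 _ Hv).
    replace (w * eta phi (al * y a + be * y b) + ev phi ts y - (w * eta phi (al * x a + be * x b) + ev phi ts x))
      with (w * (eta phi (al * y a + be * y b) - eta phi (al * x a + be * x b)) + (ev phi ts y - ev phi ts x)) by ring.
    eapply Rle_lt_trans; [apply Rabs_triang|]. rewrite Rabs_mult.
    assert (Hq : eps / 2 / (Rabs w + 1) * (Rabs w + 1) = eps / 2) by (field; lra).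
    pose proof (Rabs_pos w). pose proof (Rabs_pos (eta phi (al * y a + be * y b) - eta phi (al * x a + be * x b))).
    nra.
Qed.

Definition Ts (K i : Z) : list trm :=
  if andb (- K + 1 <=? i)%Z (i <=? K - 1)%Z then
    (Tm 1 1 0 i i :: Tm 1 1 1 i (i - 1) :: Tm 1 1 1 i (i + 1) :: Tm 2 2 0 K K ::
     Tm (-1) 1 1 K (K - 1) :: Tm (-1) 1 1 K (K + 1) :: nil)%Z
  else (Tm 1 1 0 i i :: Tm 2 2 0 i i :: nil).

Lemma psiF_ev phi K r i : psiF phi K r i = ev phi (Ts K i) r.
Proof.
  unfold psiF, Ts. destruct (andb _ _); simpl;
  repeat rewrite Rmult_1_l; repeat rewrite Rmult_0_l; repeat rewrite Rplus_0_r; ring.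
Qed.

Lemma Ts_good N K i : (0 < K)%Z -> (K < N - 1)%Z -> in_idx N i -> List.Forall (good N) (Ts K i).
Proof.
  intros HK HKN Hi. unfold in_idx in Hi. unfold Ts.
  destruct (Z.leb_spec (- K + 1) i); destruct (Z.leb_spec i (K - 1)); simpl;
  repeat apply List.Forall_cons; try apply List.Forall_nil; simpl; unfold in_idx;
  repeat split; try lra; try lia.
Qed.

Lemma tiny a b c : Rabs b <= Rabs c -> a * b * c >= -(Rabs a * (c * c)).
Proof.
  intro H.
  pose proof (Rle_abs (-(a * b * c))) as H1. rewrite Rabs_Ropp, !Rabs_mult in H1.
  assert (Hcc : Rabs c * Rabs c = c * c).
  { rewrite <- Rabs_mult. apply Rabs_pos_eq. nra. }
  pose proof (Rabs_pos a); pose proof (Rabs_pos b); pose proof (Rabs_pos c).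
  assert (Rabs a * Rabs b * Rabs c <= Rabs a * Rabs c * Rabs c).
  { apply Rmult_le_compat_r; auto. apply Rmult_le_compat_l; auto. }
  nra.
Qed.

Theorem lemma4p3
  (phi : R -> R)
  (* phi in C^3((0,oo)) *)
  (Hphi : forall x, 0 < x ->
     ex_derive_n phi 1 x /\ ex_derive_n phi 2 x /\ ex_derive_n phi 3 x /\
     continuous (Derive_n phi 3) x)
  (a0 rt1 rt2 a1 : R)
  (Ha : 0 < a0 /\ a0 < rt1 /\ rt1 < rt2 /\ rt2 < 2 * a0 /\ a0 < a1)
  (Heta1a : forall r, 0 < r < rt1 -> Derive (eta phi) r > 0)
  (Heta1b : forall r, r > rt1 -> Derive (eta phi) r < 0)
  (Heta2a : forall r, 0 < r < rt2 -> Derive (Derive (eta phi)) r < 0)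
  (Heta2b : forall r, r > rt2 -> Derive (Derive (eta phi)) r > 0)
  (Hhat0a : forall r, 0 < r < a0 -> eta_hat phi r < 0)
  (Hhat0b : forall r, r > a0 -> eta_hat phi r > 0)
  (Hhat1a : forall r, 0 < r < a1 -> Derive (eta_hat phi) r > 0)
  (Hhat1b : forall r, r > a1 -> Derive (eta_hat phi) r < 0)
  (N K : Z) (HK : (0 < K)%Z) (HKN : (K < N - 1)%Z)
  (Phi : Z -> R)
  (rL rU : R) (Hr : 0 < rL /\ rL < rU /\ rU < a1)
  (Hbdry : forall (i : Z) (t : R) (r : Z -> R),
     in_idx N i -> 0 <= t <= 1 -> in_bdry_Omega N rL rU r ->
     (r i = rU -> hom phi K Phi r t i > 0) /\
     (r i = rL -> hom phi K Phi r t i < 0))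
  (Hdd : forall r : Z -> R, in_Omega N rL rU r ->
     forall i, in_idx N i ->
       DpsiF phi K r i i >
       sum_idx N (fun j => if Z.eqb j i then 0 else Rabs (DpsiF phi K r i j))) :
  exists r : Z -> R,
    in_Omega N rL rU r /\ (forall j, in_idx N j -> psiF phi K r j = Phi j) /\
    (forall r' : Z -> R,
       in_Omega N rL rU r' -> (forall j, in_idx N j -> psiF phi K r' j = Phi j) ->
       forall j, in_idx N j -> r' j = r j).
Proof.
  destruct Hr as [HrL [Hlt HrU]].
  assert (Hed : forall u, 0 < u -> ex_derive (eta phi) u).
  { intros u Hu. destruct (Hphi u Hu) as [_ [H2 _]]. exact H2. }
  assert (HN : (0 <= N)%Z) by lia.
  set (F := fun r i => psiF phi K r i - Phi i).
  assert (HC : HCt N rL rU F).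
  { intros x Hx i Hi eps Heps.
    destruct (ev_cont phi Hed N (Ts K i) x (Ts_good N K i HK HKN Hi)
               ltac:(intros k Hk; specialize (Hx k Hk); lra) eps Heps) as [del [Hdel H]].
    exists del; split; auto. intros y _ Hy. unfold F. rewrite !psiF_ev.
    replace (ev phi (Ts K i) y - Phi i - (ev phi (Ts K i) x - Phi i))
      with (ev phi (Ts K i) y - ev phi (Ts K i) x) by ring.
    apply H; auto. }
  assert (HPM : HPMt N rL rU F).
  { intros r i Hi Hb. destruct (Hbdry i 1 r Hi ltac:(lra) Hb) as [H1 H2].
    unfold hom in H1, H2. unfold F.
    split; intro He; [specialize (H1 He)|specialize (H2 He)]; lra. }
  assert (HD : HDt N rL rU F).
  { intros x y i Hx Hy Hi Hmax Hne.
    set (d := fun k => y k - x k).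
    set (ts := Ts K i).
    assert (Hg : List.Forall (good N) ts) by (apply Ts_good; auto).
    set (ph := fun t => ev phi ts (fun k => x k + t * d k)).
    assert (Hph1 : ph 1 = ev phi ts y).
    { unfold ph. f_equal. apply functional_extensionality. intro k. unfold d. ring. }
    assert (Hph0 : ph 0 = ev phi ts x).
    { unfold ph. f_equal. apply functional_extensionality. intro k. ring. }
    assert (Hder : forall t, 0 <= t <= 1 ->
              derivable_pt_lim ph t (dd phi ts (fun k => x k + t * d k) d)).
    { intros t Ht. apply is_derive_Reals. apply ev_dir_derive with (N := N); auto.
      intros k Hk. specialize (Hx k Hk). specialize (Hy k Hk). unfold d. nra. }
    destruct (MVT_cor2 ph (fun t => dd phi ts (fun k => x k + t * d k) d) 0 1 ltac:(lra) Hder)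
      as [c [Hmvt Hc]].
    set (p := fun k => x k + c * d k).
    fold p in Hmvt.
    assert (Hp : in_Omega N rL rU p).
    { intros k Hk. specialize (Hx k Hk). specialize (Hy k Hk). unfold p, d. nra. }
    assert (Hpos : forall k, in_idx N k -> p k > 0).
    { intros k Hk. specialize (Hp k Hk). lra. }
    assert (Hpd : forall j, DpsiF phi K p i j = pd phi ts p j).
    { intro j. unfold DpsiF.
      rewrite (Derive_ext _ (fun z => ev phi ts (upd p j z))) by (intro; apply psiF_ev).
      apply is_derive_unique. apply ev_upd_derive with (N := N); auto. }
    specialize (Hdd p Hp i Hi).
    rewrite Hpd in Hdd.
    rewrite (sum_idx_ext N _ (fun j => if Z.eqb j i then 0 else Rabs (pd phi ts p j))) in Hdd
      by (intro j; rewrite Hpd; reflexivity).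
    set (S := sum_idx N (fun j => if Z.eqb j i then 0 else Rabs (pd phi ts p j))) in Hdd.
    rewrite <- (sum_pd phi N ts p d Hg) in Hmvt.
    assert (Hkey : sum_idx N (fun j => pd phi ts p j * d j) * d i >=
                   pd phi ts p i * d i * d i - S * (d i * d i)).
    { rewrite Rmult_comm, <- sum_idx_scal.
      rewrite (sum_idx_ext N _ (fun j => (if Z.eqb j i then pd phi ts p j * d j * d i else 0) +
                 (if Z.eqb j i then 0 else pd phi ts p j * d j * d i))).
      2:{ intro j. destruct (Z.eqb j i); ring. }
      rewrite sum_idx_plus, (sum_idx_delta N i (fun j => pd phi ts p j * d j * d i) Hi).
      assert (Hle : sum_idx N (fun j => (- (d i * d i)) * (if Z.eqb j i then 0 else Rabs (pd phi ts p j)))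
                    <= sum_idx N (fun j => if Z.eqb j i then 0 else pd phi ts p j * d j * d i)).
      { apply sum_idx_le; auto. intros j Hj. destruct (Z.eqb j i).
        - lra.
        - pose proof (tiny (pd phi ts p j) (d j) (d i) (Hmax j Hj)). lra. }
      rewrite sum_idx_scal in Hle. fold S in Hle. lra. }
    assert (Hdi : d i * d i > 0).
    { assert (d i <> 0) by (unfold d; intro; apply Hne; lra). nra. }
    unfold F. rewrite !psiF_ev. fold ts.
    replace (ev phi ts y - Phi i - (ev phi ts x - Phi i)) with (ph 1 - ph 0) by (rewrite Hph1, Hph0; ring).
    rewrite Hmvt. fold (d i).
    assert ((pd phi ts p i - S) * (d i * d i) > 0) by (apply Rmult_gt_0_compat; lra).
    nra. }
  destruct (abstract_main N rL rU F HN Hlt HC HPM HD) as [z [Hz [HF Hu]]].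
  exists z. split; auto. split.
  - intros j Hj. specialize (HF j Hj). unfold F in HF. lra.
  - intros r' Hr' Hs j Hj. apply Hu; auto. intros i Hi. unfold F. rewrite Hs; auto. ring.
Qed.
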